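(* Let $\mathbb{F}$ be a field of characteristic $2$, $V$ a finite-dimensional $\mathbb{F}$-vector space and $b$ a non-degenerate symmetric bilinear form on $V$. Let $x$ be a non-zero vector of $V$ with $b(x,x)=0$, and let $u$ be a $b$-symmetric endomorphism of $V$. The following are equivalent: (i) $u(x)=0$ and $u(\{x\}^\perp) \subset \mathbb{F}x$; (ii) there exist $y \in \{x\}^\perp$ and $\alpha \in \mathbb{F}$ such that $u = \alpha\, x\otimes_b x + x\wedge_b y$. Moreover, if these conditions hold then $u$ is nilpotent and $u^3=0$.
   Context: An endomorphism $u$ of $V$ is $b$-symmetric if $(x,y)\mapsto b(x,u(y))$ is symmetric. $\{x\}^\perp = \{z\in V : b(x,z)=0\}$. For $x,y\in V$, $x\otimes_b x$ is the endomorphism $z\mapsto b(x,z)\,x$, and $x \wedge_b y$ is the endomorphism $z \mapsto b(y,z)\,x - b(x,z)\,y$. *)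

(* Defs.v *)
From HB Require Import structures.
From mathcomp Require Import all_boot all_order all_algebra all_field.
Set Implicit Arguments. Unset Strict Implicit. Unset Printing Implicit Defensive.
Import GRing.Theory.
Local Open Scope ring_scope.

Definition b_symmetric (F : fieldType) (V : vectType F)
  (b : {symmetric V}) (u : 'End(V)) : Prop :=
  forall x y : V, b x (u y) = b y (u x).

Definition btensor (F : fieldType) (V : vectType F)
  (b : {symmetric V}) (x : V) : 'End(V) :=
  linfun (fun z : V => b x z *: x).

Definition bwedge (F : fieldType) (V : vectType F)
  (b : {symmetric V}) (x y : V) : 'End(V) :=
  linfun (fun z : V => b y z *: x - b x z *: y).

Definition lfun_pow (F : fieldType) (V : vectType F) (u : 'End(V)) (n : nat)
  : 'End(V) := iter n (fun f => (u \o f)%VF) \1%VF.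

Definition lfun_nilpotent (F : fieldType) (V : vectType F) (u : 'End(V)) : Prop :=
  exists n : nat, lfun_pow u n = 0.

(* Main.v *)
Require Import Defs.
From HB Require Import structures.
From mathcomp Require Import all_boot all_order all_algebra all_field.
Import GRing.Theory.
Local Open Scope ring_scope.

Section Helpers.
Variables (F : fieldType) (V : vectType F) (b : {symmetric V}).

Lemma bC (u v : V) : b u v = b v u.
Proof. by rewrite hermC /= expr0 mul1r. Qed.

Lemma bZr a (u v : V) : b u (a *: v) = a * b u v.
Proof. by rewrite linearZ. Qed.

Lemma bZl a (u v : V) : b (a *: u) v = a * b u v.
Proof. by rewrite bC bZr bC. Qed.

Lemma bBr (u v w : V) : b u (v - w) = b u v - b u w.
Proof. by rewrite linearB. Qed.

Lemma bBl (u v w : V) : b (v - w) u = b v u - b w u.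
Proof. by rewrite bC bBr bC [b u w]bC. Qed.

Definition btf (x : V) : V -> V := fun z => b x z *: x.
Lemma btf_lin x : linear (btf x).
Proof. by move=> a u v; rewrite /btf linearD linearZ /= scalerDl scalerA. Qed.
HB.instance Definition _ x := GRing.isLinear.Build F V V *:%R (btf x) (btf_lin x).
Lemma btensorE x z : btensor b x z = b x z *: x.
Proof. exact: (lfunE (btf x) z). Qed.
Definition bwf (x y : V) : V -> V := fun z => b y z *: x - b x z *: y.
Lemma bwf_lin x y : linear (bwf x y).
Proof. move=> a u v; rewrite /bwf !linearD !linearZ /= !scalerDl !scalerA.
by rewrite ![_ * a]mulrC addrACA. Qed.
HB.instance Definition _ x y := GRing.isLinear.Build F V V *:%R (bwf x y) (bwf_lin x y).
Lemma bwedgeE x y z : bwedge b x y z = b y z *: x - b x z *: y.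
Proof. exact: (lfunE (bwf x y) z). Qed.
End Helpers.

Theorem proposition4p5 (F : fieldType) (V : vectType F) (b : {symmetric V})
  (x : V) (u : 'End(V)) :
  2 \in [pchar F] ->
  nondegenerate b ->
  x != 0 -> b x x = 0 ->
  b_symmetric b u ->
  ((u x = 0 /\ (forall z, z \in orthov b <[x]>%VS -> u z \in <[x]>%VS))
   <->
   (exists (y : V) (alpha : F), y \in orthov b <[x]>%VS /\
      u = alpha *: btensor b x + bwedge b x y))
  /\
  ((u x = 0 /\ (forall z, z \in orthov b <[x]>%VS -> u z \in <[x]>%VS)) ->
   lfun_nilpotent u /\ (u \o u \o u)%VF = 0).
Proof.
move=> ch2 nd xn0 bxx usym.
have cube : (u x = 0 /\ (forall z, z \in orthov b <[x]>%VS -> u z \in <[x]>%VS)) ->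
   forall z, u (u (u z)) = 0.
  move=> [ux0 hz] z.
  have h1 : u z \in orthov b <[x]>%VS.
    by rewrite mem_orthov1 bC usym ux0 linear0.
  have /vlineP[c ->] := hz _ h1.
  by rewrite linearZ /= ux0 scaler0.
split; last first.
  move=> H; split.
    exists 3%N; apply/lfunP => z.
    by rewrite /lfun_pow /= !comp_lfunE id_lfunE zero_lfunE cube.
  by apply/lfunP => z; rewrite !comp_lfunE zero_lfunE cube.
split.
  move=> [ux0 hz].
  have : x \notin orthov b fullv.
    apply: contra xn0 => xr.
    by move/eqP: nd => nd; move: xr; rewrite nd memv0.
  case/mem_orthovPn => v _ bxv.
  pose w := (b x v)^-1 *: v.
  have bxw : b x w = 1 by rewrite bZr mulVf.
  exists (u w), (- b w (u w)); split.
    by rewrite mem_orthov1 bC usym ux0 linear0.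
  apply/lfunP => z.
  rewrite add_lfunE scale_lfunE btensorE bwedgeE.
  pose z' := z - b x z *: w.
  have hz' : z' \in orthov b <[x]>%VS.
    by rewrite mem_orthov1 bBl bZl [b w x]bC bxw mulr1 [b z x]bC subrr.
  have /vlineP[c hc] := hz _ hz'.
  have ec : c = b z (u w) - b x z * b w (u w).
    have := usym w z'; rewrite hc bZr [b w x]bC bxw mulr1 => ->.
    by rewrite bBl bZl.
  have uz : u z = u z' + b x z *: u w.
    by rewrite /z' linearB linearZ /= subrK.
  rewrite uz hc ec [b (u w) z]bC.
  have e2 : - (b x z *: u w) = b x z *: u w.
    by rewrite -scaleNr oppr_pchar2.
  rewrite e2 scalerBl scalerA mulNr scaleNr [b w (u w) * b x z]mulrC.
  by rewrite addrA [X in X + _ = _]addrC.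
move=> [y [alpha [hy ->]]].
have byx : b y x = 0 by apply/eqP; rewrite -mem_orthov1.
split.
  rewrite add_lfunE scale_lfunE btensorE bwedgeE.
  by rewrite bxx [b y x]byx !scale0r scaler0 subrr addr0.
move=> z hz.
have bxz : b x z = 0 by rewrite bC; apply/eqP; rewrite -mem_orthov1.
rewrite add_lfunE scale_lfunE btensorE bwedgeE.
by rewrite bxz !scale0r scaler0 add0r subr0 memvZ // memv_line.
Qed.
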